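(* For each integer $s\ge 2$, $m(K_{1,1,1,s})=3$.
   Context: All graphs are finite, simple and undirected. A list assignment $L$ for a graph $G$ assigns to each vertex $v$ a set $L(v)$ of colors; an $L$-coloring is a proper vertex coloring $c$ of $G$ with $c(v)\in L(v)$ for every vertex $v$. A $k$-list assignment is a list assignment with $|L(v)|=k$ for all $v$. $G$ is uniquely $k$-list colorable (U$k$LC) if there exists a $k$-list assignment $L$ such that $G$ has exactly one $L$-coloring. $G$ has property $M(k)$ if it is not U$k$LC, i.e. for every $k$-list assignment $L$, $G$ has either no $L$-coloring or at least two $L$-colorings. The m-number $m(G)$ is the least integer $k\ge 1$ such that $G$ has property $M(k)$. $K_{n_1,\dots,n_r}$ denotes the complete $r$-partite graph with parts of sizes $n_1,\dots,n_r$. *)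

(* Defs.v *)
From mathcomp Require Import all_boot.
Set Implicit Arguments. Unset Strict Implicit. Unset Printing Implicit Defensive.

(* A graph is given by a finite vertex type T and an edge relation e : rel T
   (assumed symmetric and irreflexive where relevant). *)

Definition k_list_assignment (T : finType) (L : T -> seq nat) (k : nat) : Prop :=
  forall v, uniq (L v) /\ size (L v) = k.

Definition L_coloring (T : finType) (e : rel T) (L : T -> seq nat) (c : T -> nat) : Prop :=
  (forall v, c v \in L v) /\ (forall u v, e u v -> c u != c v).

Definition unique_L_coloring (T : finType) (e : rel T) (L : T -> seq nat) : Prop :=
  exists c, L_coloring e L c /\ forall c', L_coloring e L c' -> forall v, c' v = c v.

Definition UkLC (T : finType) (e : rel T) (k : nat) : Prop :=
  exists L, k_list_assignment L k /\ unique_L_coloring e L.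

Definition property_M (T : finType) (e : rel T) (k : nat) : Prop := ~ UkLC e k.

Definition m_number_is (T : finType) (e : rel T) (k : nat) : Prop :=
  1 <= k /\ property_M e k /\ forall j, 1 <= j < k -> ~ property_M e j.

(* Complete r-partite graph with part sizes n 0, ..., n (r-1): vertices are
   pairs (i, a) with a < n i; two vertices adjacent iff in different parts. *)
Definition cmp_vertex (r : nat) (n : 'I_r -> nat) : finType :=
  {i : 'I_r & 'I_(n i)}.

Arguments cmp_vertex : clear implicits.
Definition cmp_edge (r : nat) (n : 'I_r -> nat) : rel (cmp_vertex r n) :=
  fun x y => tag x != tag y.

Definition parts_111s (s : nat) : 'I_4 -> nat :=
  fun i => nth 0 [:: 1; 1; 1; s] i.

Definition K111s_edge (s : nat) : rel (cmp_vertex 4 (parts_111s s)) :=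
  @cmp_edge 4 (parts_111s s).
Arguments cmp_edge : clear implicits.
Arguments K111s_edge : clear implicits.

(* Main.v *)
Require Import Defs.
From mathcomp Require Import all_boot.
From mathcomp Require Import zify.

Lemma pick2 (s : seq nat) u w : uniq s -> size s = 3 ->
  exists2 e, e \in s & e \notin [:: u; w].
Proof.
move=> us ss; case: (boolP (has (fun e => e \notin [:: u; w]) s)).
  by move/hasP.
move/hasPn=> H; have: {subset s <= [:: u; w]}.
  by move=> e /H; rewrite negbK.
by move/(uniq_leq_size us); rewrite ss.
Qed.
Arguments pick2 {s}.

Lemma sink (Lp Lq : seq nat) p q r : uniq Lp -> size Lp = 3 -> uniq Lq -> size Lq = 3 ->
  q \notin Lp -> r \notin Lp -> r \notin Lq ->
  exists x y, [/\ x \in Lp, y \in Lq, [&& x != p, x != q & x != r],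
     [&& y != p, y != q & y != r] & x != y].
Proof.
move=> up sp uq sq qp rp rq.
have [y yq] := pick2 q p uq sq; rewrite !inE negb_or => /andP[yq' yp].
have [x xp] := pick2 p y up sp; rewrite !inE negb_or => /andP[xp' xy].
have xq : x != q by apply: contraNneq qp => <-.
have xr : x != r by apply: contraNneq rp => <-.
have yr : y != r by apply: contraNneq rq => <-.
exists x, y; split => //; lia.
Qed.
Arguments sink {Lp Lq}.

Definition tri_concl (La Lb Lc : seq nat) p q r (x y z : nat) :=
  [/\ x \in La, y \in Lb, z \in Lc, [&& x != y, y != z & x != z] & ((x, y, z) != (p, q, r))] /\
  ([&& x \in [:: p; q; r], y \in [:: p; q; r] & z \in [:: p; q; r]] \/
   exists2 t, t \in [:: p; q; r] & all (fun w => (w == t) || (w \notin [:: p; q; r])) [:: x; y; z]).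

Lemma tri (La Lb Lc : seq nat) p q r :
  uniq La -> size La = 3 -> uniq Lb -> size Lb = 3 -> uniq Lc -> size Lc = 3 ->
  p \in La -> q \in Lb -> r \in Lc -> p != q -> q != r -> p != r ->
  exists x y z, tri_concl La Lb Lc p q r x y z.
Proof.
move=> ua sa ub sb uc sc pa qb rc pq qr pr.
have perm3 : forall x y z, x \in La -> y \in Lb -> z \in Lc ->
   x \in [:: p; q; r] -> y \in [:: p; q; r] -> z \in [:: p; q; r] ->
   [&& x != y, y != z & x != z] -> (x, y, z) != (p, q, r) ->
   exists x y z, tri_concl La Lb Lc p q r x y z.
  move=> x y z xa yb zc xs ys zs d n; exists x, y, z; split; first by [].
  by left; rewrite xs ys zs.
have two : forall x y z t, x \in La -> y \in Lb -> z \in Lc ->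
   t \in [:: p; q; r] ->
   all (fun w => (w == t) || (w \notin [:: p; q; r])) [:: x; y; z] ->
   [&& x != y, y != z & x != z] -> (x, y, z) != (p, q, r) ->
   exists x y z, tri_concl La Lb Lc p q r x y z.
  move=> x y z t xa yb zc ts A d n; exists x, y, z; split; first by [].
  by right; exists t.
case qa: (q \in La); case ra: (r \in La); case pb: (p \in Lb);
case rb: (r \in Lb); case pc: (p \in Lc); case qc: (q \in Lc).
all: first
  [ (apply: (perm3 q p r qa pb rc); rewrite /= ?inE /= ?xpair_eqE; clear -pq qr pr; lia)
  | (apply: (perm3 r q p ra qb pc); rewrite /= ?inE /= ?xpair_eqE; clear -pq qr pr; lia)
  | (apply: (perm3 p r q pa rb qc); rewrite /= ?inE /= ?xpair_eqE; clear -pq qr pr; lia)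
  | (apply: (perm3 q r p qa rb pc); rewrite /= ?inE /= ?xpair_eqE; clear -pq qr pr; lia)
  | (apply: (perm3 r p q ra pb qc); rewrite /= ?inE /= ?xpair_eqE; clear -pq qr pr; lia)
  | (have [x [y [xa yb Hx Hy xy]]] := sink p q r ua sa ub sb (negbT qa) (negbT ra) (negbT rb);
     apply: (two x y r r xa yb rc); rewrite /= ?inE /= ?xpair_eqE; clear -pq qr pr Hx Hy xy; lia)
  | (have [x [y [xa yb Hx Hy xy]]] := sink p r q ua sa uc sc (negbT ra) (negbT qa) (negbT qc);
     apply: (two x q y q xa qb yb); rewrite /= ?inE /= ?xpair_eqE; clear -pq qr pr Hx Hy xy; lia)
  | (have [x [y [xa yb Hx Hy xy]]] := sink q p r ub sb ua sa (negbT pb) (negbT rb) (negbT ra);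
     apply: (two y x r r yb xa rc); rewrite /= ?inE /= ?xpair_eqE; clear -pq qr pr Hx Hy xy; lia)
  | (have [x [y [xa yb Hx Hy xy]]] := sink q r p ub sb uc sc (negbT rb) (negbT pb) (negbT pc);
     apply: (two p x y p pa xa yb); rewrite /= ?inE /= ?xpair_eqE; clear -pq qr pr Hx Hy xy; lia)
  | (have [x [y [xa yb Hx Hy xy]]] := sink r p q uc sc ua sa (negbT pc) (negbT qc) (negbT qa);
     apply: (two y q x q yb qb xa); rewrite /= ?inE /= ?xpair_eqE; clear -pq qr pr Hx Hy xy; lia)
  | (have [x [y [xa yb Hx Hy xy]]] := sink r q p uc sc ub sb (negbT qc) (negbT pc) (negbT pb);
     apply: (two p y x p pa yb xa); rewrite /= ?inE /= ?xpair_eqE; clear -pq qr pr Hx Hy xy; lia)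
  | idtac ].
Qed.
Arguments tri {La Lb Lc p q r}.


Lemma k2arith (a b c d0 d1 : nat) : a \in [::0;1] -> b \in [::0;2] -> c \in [::0;3] ->
  d0 \in [::0;1] -> d1 \in [::0;2] -> a != b -> a != c -> b != c ->
  d0 != a -> d0 != b -> d0 != c -> d1 != a -> d1 != b -> d1 != c -> [/\ a = 1, b = 2 & c = 3].
Proof. rewrite !inE => *; split; lia. Qed.

Lemma k2b (w : nat) (b : bool) : w \in (if b then [::0;1] else [::0;2]) ->
  w != 1 -> w != 2 -> w != 3 -> w = 0.
Proof. case: b; rewrite !inE => *; lia. Qed.

Lemma notin3 (x a b c : nat) : x \notin [:: a; b; c] -> [/\ x != a, x != b & x != c].
Proof. rewrite !inE => *; split; lia. Qed.

Lemma lem_perm (w x a b c : nat) : [&& w != a, w != b & w != c] -> x \in [:: a; b; c] -> w != x.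
Proof. rewrite !inE => *; lia. Qed.

Lemma lem_two (w x t a b c : nat) : w != t -> w \in [:: a; b; c] ->
  (x == t) || (x \notin [:: a; b; c]) -> w != x.
Proof. rewrite !inE => *; lia. Qed.

Section G.
Variable s : nat.
Notation T := (cmp_vertex 4 (parts_111s s)).
Notation e := (K111s_edge s).

Definition mkv (i : nat) (Hi : i < 4) (j : 'I_(parts_111s s (Ordinal Hi))) : T :=
  existT (fun i : 'I_4 => 'I_(parts_111s s i)) (Ordinal Hi) j.

Definition va : T := @mkv 0 isT (ord0 : 'I_1).
Definition vb : T := @mkv 1 isT (ord0 : 'I_1).
Definition vc : T := @mkv 2 isT (ord0 : 'I_1).

Definition tg (v : T) : nat := tag v.

Lemma tg_lt (v : T) : tg v < 4.
Proof. by case: v => [[i Hi] j]. Qed.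

Lemma classify (v : T) : [\/ v = va, v = vb, v = vc | tg v = 3].
Proof.
case: v => [[i Hi] j]; rewrite /tg /=.
move: Hi j; case: i => [|[|[|[|i]]]] Hi j //; [apply: Or41|apply: Or42|apply: Or43|apply: Or44] => //.
all: rewrite /va /vb /vc /mkv; move: j; rewrite (bool_irrelevance Hi isT) => j.
all: by rewrite (ord1 j).
Qed.

Lemma edgeE (u v : T) : e u v = (tg u != tg v).
Proof. by []. Qed.

Lemma u1 : UkLC e 1.
Proof.
exists (fun v => [:: tg v]); split; first by move=> v.
exists tg; split; first split.
- by move=> v; rewrite inE.
- by move=> u v; rewrite edgeE.
- by move=> c' [Hin _] v; move: (Hin v); rewrite inE => /eqP.
Qed.

Definition ix (v : T) : nat := projT2 v.

Definition L2 (v : T) : seq nat :=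
  if tg v == 0 then [:: 0; 1] else if tg v == 1 then [:: 0; 2] else
  if tg v == 2 then [:: 0; 3] else if ix v == 0 then [:: 0; 1] else [:: 0; 2].
Definition col2 (v : T) : nat :=
  if tg v == 0 then 1 else if tg v == 1 then 2 else if tg v == 2 then 3 else 0.

Lemma u2 : 2 <= s -> UkLC e 2.
Proof.
move=> s2.
have H0 : 0 < s by lia.
have H1 : 1 < s by lia.
pose d0 : T := @mkv 3 isT (Ordinal H0).
pose d1 : T := @mkv 3 isT (Ordinal H1).
exists L2; split.
  move=> v; rewrite /L2; case: (tg v == 0) => //; case: (tg v == 1) => //;
  case: (tg v == 2) => //; by case: (ix v == 0).
exists col2; split; first split.
- move=> v; rewrite /L2 /col2; case: (tg v == 0) => //; case: (tg v == 1) => //;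
  case: (tg v == 2) => //; by case: (ix v == 0).
- move=> u v; rewrite edgeE /col2 => tuv.
  have := tg_lt u; have := tg_lt v; move: tuv.
  case: (tg u) => [|[|[|[|?]]]]; case: (tg v) => [|[|[|[|?]]]] //.
- move=> c' [Hin Hpr].
  have ha : c' va \in [:: 0; 1] := Hin va.
  have hb : c' vb \in [:: 0; 2] := Hin vb.
  have hc : c' vc \in [:: 0; 3] := Hin vc.
  have h0 : c' d0 \in [:: 0; 1] := Hin d0.
  have h1 : c' d1 \in [:: 0; 2] := Hin d1.
  have e1 := Hpr va vb isT. have e2 := Hpr va vc isT. have e3 := Hpr vb vc isT.
  have e4 := Hpr d0 va isT. have e5 := Hpr d0 vb isT. have e6 := Hpr d0 vc isT.
  have e7 := Hpr d1 va isT. have e8 := Hpr d1 vb isT. have e9 := Hpr d1 vc isT.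
  have [A B C] := @k2arith _ _ _ _ _ ha hb hc h0 h1 e1 e2 e3 e4 e5 e6 e7 e8 e9.
  move=> v; case: (classify v) => [->|->|->|tv]; rewrite ?A ?B ?C //.
  have hv := Hin v.
  have f1 : c' v != c' va by apply: Hpr; rewrite edgeE tv.
  have f2 : c' v != c' vb by apply: Hpr; rewrite edgeE tv.
  have f3 : c' v != c' vc by apply: Hpr; rewrite edgeE tv.
  rewrite A B C in f1 f2 f3.
  rewrite /col2 tv /=; move: hv; rewrite /L2 tv /= => hv.
  exact: (@k2b _ _ hv) f1 f2 f3.
Qed.

Lemma head_filter (l : seq nat) (P : pred nat) : has P l ->
  head 0 (filter P l) \in l /\ P (head 0 (filter P l)).
Proof.
rewrite has_filter; case E: (filter P l) => [|h r] //= _.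
have : h \in filter P l by rewrite E inE eqxx.
by rewrite mem_filter => /andP[].
Qed.

Lemma m3 : ~ UkLC e 3.
Proof.
move=> [L [HL [c [[Hin Hpr] Hu]]]].
have ab : c va != c vb := Hpr va vb isT.
have bg : c vb != c vc := Hpr vb vc isT.
have ag : c va != c vc := Hpr va vc isT.
have dS : forall d, tg d = 3 -> [&& c d != c va, c d != c vb & c d != c vc].
  move=> d td; apply/and3P; split; apply: Hpr; by rewrite edgeE td.
case: (boolP [exists d, (tg d == 3) &&
    has (fun x => (x != c d) && (x \notin [:: c va; c vb; c vc])) (L d)]).
  move/existsP => [dd] /andP[tdd] /hasP[x xL] /andP[xd xS].
  have td : tg dd = 3 by apply/eqP.
  pose c' v := if v == dd then x else c v.
  have cL : L_coloring e L c'.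
    split.
      by move=> v; rewrite /c'; case: eqP => [->|].
    move=> u v; rewrite /c' edgeE => tuv.
    case: (eqVneq u dd) => [ud|ud]; case: (eqVneq v dd) => [vd|vd].
    - by subst; rewrite eqxx in tuv.
    - subst u; move: tuv; rewrite td; case/notin3: xS => x1 x2 x3.
      by case: (classify v) => [->|->|->|->].
    - subst v; move: tuv; rewrite td; case/notin3: xS => x1 x2 x3.
      case: (classify u) => [->|->|->|->] //= _.
      1-3: by rewrite eq_sym.
    - by apply: Hpr; rewrite edgeE.
  have := Hu c' cL dd; rewrite /c' eqxx => xcd.
  by rewrite xcd eqxx in xd.
rewrite negb_exists => /forallP Hn.
have H : forall d, tg d = 3 -> forall x, x \in L d -> x != c d -> x \in [:: c va; c vb; c vc].
  move=> d td x xL xd; have := Hn d; rewrite td eqxx /= => /hasPn /(_ x xL).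
  by rewrite xd /= negbK.
have [ua sa] := HL va. have [ub sb] := HL vb. have [uc sc] := HL vc.
have [x [y [z [[xa yb zc dxyz nxyz] Hcase]]]] :=
  tri ua sa ub sb uc sc (Hin va) (Hin vb) (Hin vc) ab bg ag.
have main : forall f : T -> nat,
    (forall d, tg d = 3 -> f d \in L d /\ [&& f d != x, f d != y & f d != z]) -> False.
  move=> f Pf.
  pose c' v := if tg v == 0 then x else if tg v == 1 then y else if tg v == 2 then z else f v.
  have cL : L_coloring e L c'.
  { split.
      move=> v; case: (classify v) => [->|->|->|tv] //.
      by rewrite /c' tv /=; case: (Pf v tv).
    move=> u v; rewrite edgeE.
    case: (classify u) => [->|->|->|tu]; case: (classify v) => [->|->|->|tv];
      rewrite /c' /= ?tu ?tv //=; move=> _.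
    all: try (case: (Pf v tv) => _ /and3P[hv1 hv2 hv3]).
    all: try (case: (Pf u tu) => _ /and3P[hu1 hu2 hu3]).
    all: case/and3P: dxyz => d1 d2 d3.
    all: by [| rewrite eq_sym]. }
  have Hc := Hu c' cL.
  have := Hc va; have := Hc vb; have := Hc vc; rewrite /c' /= => E3 E2 E1.
  by move: nxyz; rewrite E1 E2 E3 eqxx.
case: Hcase => [Hp | [t tS Ht]].
  apply: (main c) => d td; split; first exact: Hin.
  case/and3P: Hp => hx hy hz.
  by rewrite !(@lem_perm _ _ _ _ _ (dS d td)).
apply: (main (fun d => head 0 (filter (fun w => w \notin [:: c d; t]) (L d)))) => d td.
have [hL hP] : head 0 (filter (fun w => w \notin [:: c d; t]) (L d)) \in L d /\
   (head 0 (filter (fun w => w \notin [:: c d; t]) (L d)) \notin [:: c d; t]).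
  apply: head_filter; apply/hasP.
  have [uL sL] := HL d.
  exact: pick2 (c d) t uL sL.
split; first exact: hL.
move: hP; set w := head 0 _ => hP.
move: hP; rewrite !inE negb_or => /andP[wc wt].
have wS := H d td w hL wc.
move: Ht => /= /and4P[hx hy hz _].
by rewrite !(@lem_two _ _ _ _ _ _ wt wS).
Qed.
End G.

Theorem proposition3p6 (s : nat) : 2 <= s -> m_number_is (K111s_edge s) 3.
Proof.
move=> s2; split; first by []; split; first exact: m3.
move=> j /andP[j1 j3] HM; apply: HM.
have : (j = 1) \/ (j = 2) by lia.
by case=> ->; [exact: u1 | exact: u2].
Qed.
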